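(* Let $\mathbf{X}\in\mathbb{R}^{n\times p}$, $\mathbf{A}\in\mathbb{R}^n$ with $\mathbf{A}\neq\mathbf{0}$, and $\mathbf{Y}\in\mathbb{R}^n$ be given, and define $\mathbf{Q}_A=I_n-\mathbf{A}\mathbf{A}^\top/\|\mathbf{A}\|^2$, $\mathbf{Z}=\mathbf{Q}_A\mathbf{X}$, $\mathbf{a}=\mathbf{X}^\top\mathbf{A}$, $\mathbf{z}=\mathbf{X}^\top\mathbf{Y}-\frac{\mathbf{A}^\top\mathbf{Y}}{\|\mathbf{A}\|^2}\mathbf{a}$ $(=\mathbf{Z}^\top\mathbf{Y})$, and $\mathbf{V}=\mathbf{X}^\top\mathbf{X}-\mathbf{a}\mathbf{a}^\top/\|\mathbf{A}\|^2$ $(=\mathbf{Z}^\top\mathbf{Z})$. Assume $\mathbf{V}$ is positive definite and let $\mathbf{p}=\mathbf{V}^{-1}\mathbf{a}$, $\mathbf{q}=\mathbf{V}^{-1}\mathbf{z}$, both assumed nonzero. Equip $\mathbb{R}^p$ with the inner product $\langle\mathbf{u}_1,\mathbf{u}_2\rangle_{\mathbf{V}}=\mathbf{u}_1^\top\mathbf{V}\mathbf{u}_2$, norm $\|\mathbf{u}\|_{\mathbf{V}}=\sqrt{\mathbf{u}^\top\mathbf{V}\mathbf{u}}$, and angle $\angle_{\mathbf{V}}(\mathbf{u}_1,\mathbf{u}_2)$ defined by $\cos\angle_{\mathbf{V}}(\mathbf{u}_1,\mathbf{u}_2)=\langle\mathbf{u}_1,\mathbf{u}_2\rangle_{\mathbf{V}}/(\|\mathbf{u}_1\|_{\mathbf{V}}\|\mathbf{u}_2\|_{\mathbf{V}})$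 for nonzero vectors. Let $\varphi=\angle_{\mathbf{V}}(\mathbf{p},\mathbf{q})$. Then, over nonzero $\mathbf{w}\in\mathbb{R}^p$, the alignment $\cos\angle_{\mathbf{V}}(\mathbf{w},\mathbf{p})\cdot\cos\angle_{\mathbf{V}}(\mathbf{w},\mathbf{q})$ is maximised by the direction $\mathbf{w}^*$ that bisects the angle between $\mathbf{p}$ and $\mathbf{q}$, i.e. $\angle_{\mathbf{V}}(\mathbf{w}^*,\mathbf{p})=\angle_{\mathbf{V}}(\mathbf{w}^*,\mathbf{q})=\varphi/2$, and for the function $$h(\mathbf{w})=\frac{(\mathbf{w}^\top\mathbf{a})(\mathbf{w}^\top\mathbf{z})}{\|\mathbf{A}\|^2\,(\mathbf{w}^\top\mathbf{V}\mathbf{w})}$$ one has $$h(\mathbf{w}^* )=\frac{\|\mathbf{p}\|_{\mathbf{V}}\|\mathbf{q}\|_{\mathbf{V}}}{\|\mathbf{A}\|^2}\cdot\frac{1+\cos\varphi}{2}.$$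
   Context: $\mathbf{X}$ is a matrix of candidate mediators, $\mathbf{A}$ a treatment vector and $\mathbf{Y}$ an outcome vector (all column-centred). For a weight vector $\mathbf{w}$, the OLS path coefficients of the composite mediator $\mathbf{X}\mathbf{w}$ are $\hat\alpha(\mathbf{w})=\mathbf{w}^\top\mathbf{a}/\|\mathbf{A}\|^2$ and $\hat\beta(\mathbf{w})=\mathbf{w}^\top\mathbf{z}/(\mathbf{w}^\top\mathbf{V}\mathbf{w})$, so $h(\mathbf{w})=\hat\alpha(\mathbf{w})\hat\beta(\mathbf{w})$ is the sample indirect effect; $h$ is invariant under rescaling of $\mathbf{w}$ by nonzero scalars. The identity $h(\mathbf{w})=\frac{\|\mathbf{p}\|_{\mathbf{V}}\|\mathbf{q}\|_{\mathbf{V}}}{\|\mathbf{A}\|^2}\cos\angle_{\mathbf{V}}(\mathbf{w},\mathbf{p})\cos\angle_{\mathbf{V}}(\mathbf{w},\mathbf{q})$ holds for nonzero $\mathbf{w}$. *)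

(* Defs.v *)
From HB Require Import structures.
From mathcomp Require Import all_boot all_order all_algebra.
From mathcomp Require Import all_classical all_reals all_analysis.
Set Implicit Arguments. Unset Strict Implicit. Unset Printing Implicit Defensive.
Import Order.TTheory GRing.Theory Num.Theory.
Local Open Scope ring_scope.

Section Defs.
Variables (R : realType) (n p : nat).

Definition sqnorm (A : 'cV[R]_n) : R := (A^T *m A) 0 0.

(* Q_A = I_n - A A^T / ||A||^2 and Z = Q_A X (not needed for the statement,
   recorded for reference; z and V are defined by the paper's explicit formulas) *)
Definition QA (A : 'cV[R]_n) : 'M[R]_n := 1%:M - (sqnorm A)^-1 *: (A *m A^T).
Definition Zmat (X : 'M[R]_(n, p)) (A : 'cV[R]_n) : 'M[R]_(n, p) := QA A *m X.

Definition avec (X : 'M[R]_(n, p)) (A : 'cV[R]_n) : 'cV[R]_p := X^T *m A.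
Definition zvec (X : 'M[R]_(n, p)) (A Y : 'cV[R]_n) : 'cV[R]_p :=
  X^T *m Y - ((A^T *m Y) 0 0 / sqnorm A) *: avec X A.
Definition Vmat (X : 'M[R]_(n, p)) (A : 'cV[R]_n) : 'M[R]_p :=
  X^T *m X - (sqnorm A)^-1 *: (avec X A *m (avec X A)^T).

Definition posdef (V : 'M[R]_p) : Prop :=
  forall u : 'cV[R]_p, u != 0 -> 0 < (u^T *m V *m u) 0 0.

Definition vdot (V : 'M[R]_p) (u1 u2 : 'cV[R]_p) : R := (u1^T *m V *m u2) 0 0.
Definition vnorm (V : 'M[R]_p) (u : 'cV[R]_p) : R := Num.sqrt (vdot V u u).
Definition vcos (V : 'M[R]_p) (u1 u2 : 'cV[R]_p) : R :=
  vdot V u1 u2 / (vnorm V u1 * vnorm V u2).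
Definition vangle (V : 'M[R]_p) (u1 u2 : 'cV[R]_p) : R := acos (vcos V u1 u2).

Definition hfun (X : 'M[R]_(n, p)) (A Y : 'cV[R]_n) (w : 'cV[R]_p) : R :=
  ((w^T *m avec X A) 0 0 * (w^T *m zvec X A Y) 0 0)
  / (sqnorm A * vdot (Vmat X A) w w).
End Defs.

(* Main.v *)
Require Import Defs.
From HB Require Import structures.
From mathcomp Require Import all_boot all_order all_algebra.
From mathcomp Require Import all_classical all_reals all_analysis.
From mathcomp Require Import ring lra.
Set Implicit Arguments. Unset Strict Implicit. Unset Printing Implicit Defensive.
Import Order.TTheory GRing.Theory Num.Theory.
Local Open Scope ring_scope.

Lemma real_key (R : realType) (sP sQ sW x y C : R) : 0 < sP -> 0 < sQ -> 0 < sW ->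
  (x / sP + y / sQ) ^+ 2 <= sW ^+ 2 * (2 + 2 * (C / (sP * sQ))) ->
  x / (sW * sP) * (y / (sW * sQ)) <= (1 + C / (sP * sQ)) / 2.
Proof.
move=> hP hQ hW.
set a := x / sP; set b := y / sQ; set k := C / (sP * sQ) => H.
have -> : x / (sW * sP) * (y / (sW * sQ)) = a * b / sW ^+ 2.
  rewrite /a /b; field; rewrite ?gt_eqF //.
rewrite ler_pdivrMr ?exprn_gt0 //. have := sqr_ge0 (a - b). rewrite !expr2 in H *. nra.
Qed.

Lemma half_cos (R : realType) (c : R) : -1 <= c <= 1 ->
  0 <= cos (acos c / 2) /\ cos (acos c / 2) ^+ 2 = (1 + c) / 2.
Proof.
move=> hc; set t := acos c / 2.
have h0 := acos_ge0 hc; have h1 := acos_lepi hc; have hpi := @pi_gt0 R.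
split.
  apply: cos_ge0_pihalf; rewrite /t; apply/andP; split; lra.
have tt : t + t = acos c by rewrite /t; lra.
have := cosD t t; rewrite tt acosK ?in_itv //= => E.
have := sin2cos2 t; rewrite !expr2 => E2. nra.
Qed.

Section H.
Variables (R : realType) (p : nat) (V : 'M[R]_p).

Lemma vdotDl u1 u2 w k : vdot V (u1 + k *: u2) w = vdot V u1 w + k * vdot V u2 w.
Proof. by rewrite /vdot linearD /= linearZ /= !mulmxDl -!scalemxAl !mxE. Qed.

Lemma vdotDr w u1 u2 k : vdot V w (u1 + k *: u2) = vdot V w u1 + k * vdot V w u2.
Proof. by rewrite /vdot mulmxDr -scalemxAr !mxE. Qed.

Lemma vdot0r w : vdot V w 0 = 0.
Proof. by rewrite /vdot mulmx0 mxE. Qed.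

Lemma vdotZl u w k : vdot V (k *: u) w = k * vdot V u w.
Proof. by rewrite /vdot linearZ /= -!scalemxAl !mxE. Qed.

Lemma vdotZr u w k : vdot V w (k *: u) = k * vdot V w u.
Proof. by rewrite /vdot -!scalemxAr !mxE. Qed.

Lemma vdotDl' u1 u2 w : vdot V (u1 + u2) w = vdot V u1 w + vdot V u2 w.
Proof. by rewrite /vdot linearD /= !mulmxDl !mxE. Qed.

Lemma vdotDr' w u1 u2 : vdot V w (u1 + u2) = vdot V w u1 + vdot V w u2.
Proof. by rewrite /vdot mulmxDr !mxE. Qed.

Lemma vdot0l w : vdot V 0 w = 0.
Proof. by rewrite /vdot trmx0 !mul0mx mxE. Qed.

Lemma vdotC (sV : V^T = V) u w : vdot V u w = vdot V w u.
Proof.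
rewrite /vdot.
have E : forall M : 'M[R]_1, M 0 0 = (M^T) 0 0 by move=> M; rewrite mxE.
rewrite E.
by rewrite !trmx_mul sV trmxK mulmxA.
Qed.

Hypothesis pd : posdef V.

Lemma vdot_ge0 u : 0 <= vdot V u u.
Proof. have [->|nz] := eqVneq u 0; first by rewrite vdot0r. exact/ltW/pd. Qed.

Lemma vdot_gt0 {u} : u != 0 -> 0 < vdot V u u.
Proof. exact: pd. Qed.

Lemma V_unit : V \in unitmx.
Proof.
rewrite unitmxE unitfE; apply/negP => /det0P [v nz vV].
have := @pd v^T; rewrite trmxK vV mul0mx mxE ltxx trmx_eq0 nz. by move=> /(_ isT).

Qed.

Hypothesis sV : V^T = V.

Lemma CS u w : vdot V u w ^+ 2 <= vdot V u u * vdot V w w.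
Proof.
have [->|nz] := eqVneq w 0; first by rewrite !vdot0r expr0n /= mulr0.
have Hw := @pd w nz.
have := vdot_ge0 (vdot V w w *: u + (- vdot V u w) *: w).
rewrite -[vdot V w w *: u]add0r vdotDl vdotDr vdotDr !vdotDl.
rewrite !vdotDr !vdot0l !vdot0r (vdotC sV w u) => H.
have Hw' : 0 < vdot V w w by [].
nra.
Qed.

Lemma vnorm_gt0 {u} : u != 0 -> 0 < vnorm V u.
Proof. by move=> h; rewrite /vnorm sqrtr_gt0 vdot_gt0. Qed.

Lemma vnorm_sq u : vnorm V u ^+ 2 = vdot V u u.
Proof. by rewrite /vnorm sqr_sqrtr // vdot_ge0. Qed.

Lemma vcos_bound u w : u != 0 -> w != 0 -> -1 <= vcos V u w <= 1.
Proof.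
move=> hu hw; have := CS u w; rewrite -!vnorm_sq /vcos.
have := vnorm_gt0 hu; have := vnorm_gt0 hw.
set D := vdot V u w; set a := vnorm V u; set b := vnorm V w => hb ha H.
have hs : 0 < a * b by rewrite mulr_gt0.
rewrite ler_pdivrMr // ler_pdivlMr //.
apply/andP; split; nra.
Qed.

Lemma key p1 q1 w : p1 != 0 -> q1 != 0 -> w != 0 ->
  vcos V w p1 * vcos V w q1 <= (1 + vcos V p1 q1) / 2.
Proof.
move=> hp hq hw.
have := CS w ((vnorm V p1)^-1 *: p1 + (vnorm V q1)^-1 *: q1).
rewrite vdotDr' !vdotZr vdotDl' !vdotZl !vdotDr' !vdotZr (vdotC sV q1 p1).
rewrite -!vnorm_sq /vcos => H.
have hP := vnorm_gt0 hp; have hQ := vnorm_gt0 hq; have hW := vnorm_gt0 hw.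
apply: real_key => //.
apply: (le_trans _ (le_trans H _)); rewrite le_eqVlt; apply/orP; left; apply/eqP.
  by field; rewrite !gt_eqF.
by field; rewrite !gt_eqF.
Qed.

Lemma angle_half u ws c : u != 0 -> -1 < c <= 1 ->
  vdot V ws u = vnorm V u * (1 + c) -> vdot V ws ws = 2 + 2 * c ->
  vangle V ws u = acos c / 2.
Proof.
move=> hu /andP[c1 c2] e1 e2.
rewrite /vangle /vcos e1 {2}/vnorm e2.
have hc : -1 <= c <= 1 by apply/andP; split; lra.
have [d0 d2] := half_cos hc.
have h0 := acos_ge0 hc; have h1 := acos_lepi hc; have hpi := @pi_gt0 R.
set d := cos (acos c / 2) in d0 d2 *.
have hP := vnorm_gt0 hu.
have hr : 0 < Num.sqrt (2 + 2 * c) by rewrite sqrtr_gt0; lra.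
have r2 : Num.sqrt (2 + 2 * c) ^+ 2 = 2 + 2 * c by rewrite sqr_sqrtr //; lra.
set r := Num.sqrt (2 + 2 * c) in hr r2 *.
have -> : vnorm V u * (1 + c) / (r * vnorm V u) = d.
  have e : 1 + c = r ^+ 2 / 2 by rewrite r2; lra.
  rewrite e.
  have -> : vnorm V u * (r ^+ 2 / 2) / (r * vnorm V u) = r / 2.
    by field; rewrite !gt_eqF.
  rewrite !expr2 in d2 r2.
  apply: le_anti; apply/andP; split; nra.
rewrite /d cosK // in_itv /=; apply/andP; split; lra.
Qed.
End H.

Theorem proposition1 (R : realType) (n p : nat)
    (X : 'M[R]_(n, p)) (A Y : 'cV[R]_n) :
  let V := Vmat X A in
  let pv := invmx V *m avec X A in
  let qv := invmx V *m zvec X A Y in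
  let phi := vangle V pv qv in
  A != 0 -> posdef V -> pv != 0 -> qv != 0 ->
  (forall ws : 'cV[R]_p, ws != 0 ->
     vangle V ws pv = phi / 2 -> vangle V ws qv = phi / 2 ->
     (forall w : 'cV[R]_p, w != 0 ->
        vcos V w pv * vcos V w qv <= vcos V ws pv * vcos V ws qv)
     /\ hfun X A Y ws
        = vnorm V pv * vnorm V qv / sqnorm A * ((1 + cos phi) / 2))
  /\ (-1 < vcos V pv qv ->
      exists ws : 'cV[R]_p, ws != 0 /\
        vangle V ws pv = phi / 2 /\ vangle V ws qv = phi / 2).
Proof.
move=> V pv qv phi HA Hpd Hp Hq.
have sV : V^T = V.
  by rewrite /V /Vmat linearB /= linearZ /= !trmx_mul !trmxK.
have hU := V_unit Hpd.
have Einv : forall (w b : 'cV[R]_p), vdot V w (invmx V *m b) = (w^T *m b) 0 0.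
  by move=> w b; rewrite /vdot mulmxA -(mulmxA _ V) mulmxV // mulmx1.
have hc := vcos_bound Hpd sV Hp Hq.
have cphi : cos phi = vcos V pv qv by rewrite /phi /vangle acosK // in_itv.
have [hpos hsq] := half_cos hc.
split.
  move=> ws hws Hap Haq.
  have c1 : vcos V ws pv = cos (phi / 2).
    by rewrite -Hap /vangle acosK // in_itv; exact: vcos_bound.
  have c2 : vcos V ws qv = cos (phi / 2).
    by rewrite -Haq /vangle acosK // in_itv; exact: vcos_bound.
  have prod : vcos V ws pv * vcos V ws qv = (1 + cos phi) / 2.
    by rewrite c1 c2 -expr2 cphi.
  split.
    by move=> w hw; rewrite prod cphi; exact: key.
  rewrite /hfun -prod -(Einv ws (avec X A)) -(Einv ws (zvec X A Y)) -/pv -/qv.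
  rewrite -(vnorm_sq Hpd ws) /vcos.
  have hP := vnorm_gt0 Hpd Hp; have hQ := vnorm_gt0 Hpd Hq.
  have hW := vnorm_gt0 Hpd hws.
  have [->|hN] := eqVneq (sqnorm A) 0.
    by rewrite !(mul0r, invr0, mulr0).
  by field; rewrite hN !gt_eqF.
move=> hc1.
have hP := vnorm_gt0 Hpd Hp; have hQ := vnorm_gt0 Hpd Hq.
set c := vcos V pv qv in hc1 hc cphi hsq hpos *.
have Cdef : vdot V pv qv = c * vnorm V pv * vnorm V qv.
  by rewrite /c /vcos; field; rewrite !gt_eqF.
set ws := (vnorm V pv)^-1 *: pv + (vnorm V qv)^-1 *: qv.
have e1 : vdot V ws pv = vnorm V pv * (1 + c).
  rewrite vdotDl' !vdotZl (vdotC sV qv pv) Cdef -(vnorm_sq Hpd pv).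
  by field; rewrite !gt_eqF.
have e2 : vdot V ws qv = vnorm V qv * (1 + c).
  rewrite vdotDl' !vdotZl Cdef -(vnorm_sq Hpd qv).
  by field; rewrite !gt_eqF.
have e3 : vdot V ws ws = 2 + 2 * c.
  rewrite {2}/ws vdotDr' !vdotZr e1 e2.
  by field; rewrite !gt_eqF.
have hc' : -1 < c <= 1 by case/andP: hc => _ ->; rewrite hc1.
exists ws; split.
  apply/negP => /eqP e; move: e3; rewrite e vdot0l; lra.
have -> : phi = acos c by [].
by split; apply: (angle_half Hpd _ hc').
Qed.
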